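(* Let $S$ be a positive integer, $M>0$, and let $G=\bigcup_{i=1}^t\left[\theta_i-\frac{\zeta_i}{M},\theta_i+\frac{\zeta_i}{M}\right]\subset\mathbb{R}$ be a union of $t$ pairwise disjoint intervals, with $t\le S$, $\zeta_i\ge0$ and $\sum_{i=1}^t\zeta_i\le S\zeta$. If $\zeta\le\frac{1}{8S(2S-1)}$, then there exists $m\in[2,4]$ such that $$\left[\theta_i-\frac{\zeta_i}{M}-\frac{q}{Mm},\ \theta_i+\frac{\zeta_i}{M}-\frac{q}{Mm}\right]\cap\left[\theta_j-\frac{\zeta_j}{M},\ \theta_j+\frac{\zeta_j}{M}\right]=\varnothing$$ for all $1\le i,j\le t$ and all $q\in\mathbb{Z}\setminus\{0\}$. *)

(* Defs.v *)
From HB Require Import structures.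
From mathcomp Require Import all_boot all_order all_algebra.
From mathcomp Require Export reals.
From mathcomp Require Export all_boot all_order all_algebra.
Set Implicit Arguments. Unset Strict Implicit. Unset Printing Implicit Defensive.
Import Order.TTheory GRing.Theory Num.Theory.
Local Open Scope ring_scope.

Definition cint (R : realType) (c r : R) : pred R :=
  fun x => (c - r <= x) && (x <= c + r).

(* Main.v *)
Require Import Defs.
From HB Require Import structures.
From mathcomp Require Import all_boot all_order all_algebra reals.
From mathcomp Require Import ring lra zify.
Import Order.TTheory GRing.Theory Num.Theory.
Local Open Scope ring_scope.
Definition clip {R : realType} (a b l u : R) := Num.max 0 (Num.min u b - Num.max l a).
Ltac mm := repeat match goal with
 | H : context[Order.max _ _] |- _ => move: H
 | H : context[Order.min _ _] |- _ => move: H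
 | |- context[Order.max ?x ?y] => case: (leP x y) => ?
 | |- context[Order.min ?x ?y] => case: (leP x y) => ?
 end; intros.
Lemma clip_ge0 (R : realType) (a b l u : R) : 0 <= clip a b l u.
Proof. rewrite /clip; mm; lra. Qed.
Lemma clip_mono (R : realType) (a a' b l u : R) : a <= a' -> clip a' b l u <= clip a b l u.
Proof. rewrite /clip => h; mm; lra. Qed.
Lemma cover_itv (R : realType) (I : eqType) (l u : I -> R) n : forall (s : seq I) (a b : R), (size s <= n)%N -> a <= b ->
  \sum_(k <- s) clip a b (l k) (u k) < b - a ->
  exists x, a <= x <= b /\ forall k, k \in s -> ~~ ((l k <= x) && (x <= u k)).
Proof.
elim: n => [|n IH] s a b.
  rewrite leqn0 => /nilP -> ab _; exists a; split => //; by rewrite ab lexx.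
move=> hs ab hsum.
case: (boolP (has (fun k => (l k <= a) && (a <= u k)) s)); last first.
  move/hasPn => H; exists a; split; first by rewrite lexx ab.
  exact: H.
case/hasP => k ks /andP[lk ku].
have P := perm_to_rem ks.
move: hsum; rewrite (perm_big _ P) big_cons /=.
set S' := \sum_(j <- rem k s) _.
have S'0 : 0 <= S' by apply: sumr_ge0 => j _; exact: clip_ge0.
have [hub|hub] := leP (u k) b; last first.
  rewrite /clip; mm; lra.
have -> : clip a b (l k) (u k) = u k - a by rewrite /clip; mm; lra.
move=> hlt.
pose a' := u k + (b - u k - S') / 2.
have [x [hx Hx]] : exists x, a' <= x <= b /\ forall k0, k0 \in rem k s -> ~~ ((l k0 <= x) && (x <= u k0)).
  apply: IH.
  - rewrite size_rem //; case: (s) hs ks => //= *; lia.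
  - rewrite /a'; lra.
  - apply: (le_lt_trans (y := S')).
      by apply: ler_sum => j _; apply: clip_mono; rewrite /a'; lra.
    rewrite /a'; lra.
exists x; split.
  move/andP: hx => [h1 h2]; apply/andP; split; rewrite /a' in h1; lra.
move=> k0; rewrite (perm_mem P) inE => /orP [/eqP -> | /Hx //].
apply/negP => /andP [_ h]; move/andP: hx => [h1 _]; rewrite /a' in h1; lra.
Qed.
Lemma count_itv (a b m n : nat) : (count (fun q => (a <= q <= b)%N) (iota m n) <= b.+1 - maxn a m)%N.
Proof.
elim: n m => [|n IH] m //=.
have := IH m.+1; case: (boolP (a <= m <= b)%N) => /= h; lia.
Qed.

Lemma count_real (R : realType) (L U : R) N : 1 <= L ->
  (0 < count (fun q : nat => ((L <= q%:R) && (q%:R <= U))%R) (iota 1 N))%N ->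
  (count (fun q : nat => ((L <= q%:R) && (q%:R <= U))%R) (iota 1 N))%:R <= U - L + 1.
Proof.
move=> L1 hc.
have cpos : (0 < Num.ceil L)%R by rewrite ceil_gt0; lra.
set a := `|Num.ceil L|%N.
have ha : Num.ceil L = a%:Z by rewrite /a gez0_abs // ltW.
have haL : L <= a%:R.
  have := real_ceil_ge (num_real L); rewrite ha; by [].
set b := Num.trunc U.
have sub : subpred (fun q : nat => ((L <= q%:R) && (q%:R <= U))%R) (fun q => (a <= q <= b)%N).
  move=> q /andP[h1 h2]; apply/andP; split.
    rewrite -lez_nat -ha real_ceil_le_int ?num_real //.
  rewrite /b truncn_ge_nat //; apply: le_trans h2; exact: ler0n.
move: (hc); rewrite -has_count => /hasP [q _ /[dup] hq /sub /andP[aq qb]].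
have hU : 0 <= U by move/andP: hq => [_ h]; apply: le_trans h; exact: ler0n.
have := leq_trans (sub_count sub (iota 1 N)) (count_itv a b 1 N).
have a1 : (1 <= a)%N by rewrite -ltz_nat -ha.
rewrite (_ : maxn a 1 = a); last by lia.
rewrite -(ler_nat R) natrB; last by lia.
move=> h; apply: le_trans h _.
have hb : (b%:R <= U) by rewrite /b truncn_le.
rewrite -addn1 natrD; lra.
Qed.
Lemma sum_if_count (R : realType) (P : pred nat) (c : R) (s : seq nat) :
  \sum_(q <- s) (if P q then c else 0) = c * (count P s)%:R.
Proof.
elim: s => [|x s IH]; first by rewrite big_nil mulr0.
rewrite big_cons IH /=; case: (P x); rewrite /= ?add0n ?natrD; lra.
Qed.

Lemma clip_le (R : realType) (a b l u : R) : l <= u -> clip a b l u <= u - l.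
Proof. rewrite /clip => h; mm; lra. Qed.
Lemma clip0u (R : realType) (a b l u : R) : u <= a -> clip a b l u = 0.
Proof. rewrite /clip => h; mm; lra. Qed.
Lemma clip0l (R : realType) (a b l u : R) : b <= l -> clip a b l u = 0.
Proof. rewrite /clip => h; mm; lra. Qed.

Lemma pair_pos (R : realType) (d w : R) (N : nat) : 0 < d -> 0 <= w ->
  \sum_(q <- iota 1 N) clip (1/4) (1/2) ((d-w)/q%:R) ((d+w)/q%:R) <= 4*w*(1+4*w).
Proof.
move=> d0 w0.
set A := d - w; set B := d + w.
pose P (L : R) := fun q : nat => ((L <= q%:R) && (q%:R <= 4 * B))%R.
have key : forall L, 1 <= L -> 2*A <= L -> (L = 1 \/ L = 2*A) ->
    \sum_(q <- iota 1 N) clip (1/4) (1/2) (A/q%:R) (B/q%:R) <= (2*w/L) * (count (P L) (iota 1 N))%:R.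
  move=> L L1 L2 L3.
  rewrite -sum_if_count big_seq [X in _ <= X]big_seq.
  apply: ler_sum => q; rewrite mem_iota => /andP[q1 _].
  have qpos : (0 < q%:R :> R) by rewrite ltr0n; lia.
  set x := A / q%:R; set y := B / q%:R.
  have ex : x * q%:R = A by rewrite /x divfK // gt_eqF.
  have ey : y * q%:R = B by rewrite /y divfK // gt_eqF.
  have q1R : (1 <= q%:R :> R) by rewrite ler1n.
  rewrite /P; case: (boolP (L <= q%:R)) => hL /=; last first.
    rewrite -ltNge in hL.
    case: L3 => HL; first lra.
    rewrite clip0l //. nra.
  case: (boolP (q%:R <= 4 * B)) => hB /=; last first.
    rewrite -ltNge in hB.
    rewrite clip0u //. nra.
  have hAB : A <= B by rewrite /A /B; lra.
  have xy : x <= y by nra.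
  apply: le_trans ((@clip_le R (1/4) (1/2) x y xy)) _.
  have -> : y - x = 2 * w / q%:R by rewrite /y /x /A /B; field; rewrite gt_eqF.
  rewrite ler_pdivrMr // mulrAC ler_pdivlMr; last lra.
  nra.
have cnt := fun L => @count_real R L (4 * B) N.
have [h|h] := leP (2 * A) 1.
  apply: le_trans (key 1 (lexx _) h (or_introl erefl)) _.
  case: (posnP (count (P 1) (iota 1 N))) => hc.
    rewrite hc mulr0; nra.
  have := cnt 1 (lexx _) hc; rewrite -/(P 1) => hc'.
  rewrite divr1; apply: le_trans (ler_wpM2l _ hc') _; first lra.
  rewrite /B /A in h *; nra.
apply: le_trans (key (2*A) (ltW h) (lexx _) (or_intror erefl)) _.
case: (posnP (count (P (2*A)) (iota 1 N))) => hc.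
  rewrite hc mulr0; nra.
have := cnt (2*A) (ltW h) hc; rewrite -/(P (2*A)) => hc'.
have Ap : 0 < 2 * A by lra.
set z := 2 * w / (2 * A).
have ez : z * (2 * A) = 2 * w by rewrite /z divfK // gt_eqF.
have z0 : 0 <= z by rewrite /z divr_ge0 //; lra.
apply: le_trans (ler_wpM2l z0 hc') _.
have : z <= 2 * w by nra.
rewrite /B /A in ez h *; nra.
Qed.
Lemma pair_nonpos (R : realType) (d w : R) (N : nat) : d <= 0 -> 0 <= w -> w <= 1/4 ->
  \sum_(q <- iota 1 N) clip (1/4) (1/2) ((d-w)/q%:R) ((d+w)/q%:R) <= 0.
Proof.
move=> d0 w0 w1; rewrite big_seq; apply: sumr_le0 => q; rewrite mem_iota => /andP[q1 _].
have qpos : (0 < q%:R :> R) by rewrite ltr0n; lia.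
have q1R : (1 <= q%:R :> R) by rewrite ler1n.
rewrite clip0u // ler_pdivrMr //; nra.
Qed.

Lemma esum (R : realType) (t : nat) (r : 'I_t -> R) (dd : 'I_t -> 'I_t -> R) :
  (forall i, 0 <= r i) -> (forall i j, dd j i = - dd i j) ->
  \sum_i \sum_j (if 0 < dd i j then r i + r j else 0) <= (t%:R - 1) * \sum_i r i.
Proof.
move=> r0 anti.
set e := fun i j => if 0 < dd i j then r i + r j else 0.
have Hex : \sum_i \sum_j e i j = \sum_i \sum_j e j i by rewrite exchange_big.
have H1 : \sum_i \sum_j (e i j + e j i) <= \sum_i \sum_j (if i == j then 0 else r i + r j).
  apply: ler_sum => i _; apply: ler_sum => j _.
  rewrite /e; case: eqP => [->|/eqP ij].
    have djj : dd j j = 0 by have := anti j j; lra.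
    by rewrite djj ltxx addr0.
  rewrite anti oppr_gt0; have := r0 i; have := r0 j; case: ltgtP => h; lra.
have H2 : forall i, \sum_j (if i == j then 0 else r i + r j) = \sum_j (r i + r j) - (r i + r i).
  move=> i; rewrite [in RHS](bigD1 i) //= (bigD1 i) //= eqxx add0r.
  rewrite (eq_bigr (fun j => r i + r j)); last by move=> j /negbTE; rewrite eq_sym => ->.
  lra.
have H3 : forall i, \sum_(j < t) (r i + r j) = r i * t%:R + \sum_j r j.
  by move=> i; rewrite big_split /= sumr_const card_ord mulr_natr.
have K : \sum_i \sum_j (if i == j then 0 else r i + r j) = 2 * (t%:R - 1) * \sum_i r i.
  under eq_bigr do rewrite H2 H3.
  rewrite !big_split /= sumrN big_split /= sumr_const card_ord -mulr_suml -mulr_natr.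
  lra.
move: H1; rewrite K.
under eq_bigr do rewrite big_split /=.
rewrite big_split /= -Hex -/e.
lra.
Qed.
Lemma le_sum_term (R : realType) (t : nat) (F : 'I_t -> R) i :
  (forall j, 0 <= F j) -> F i <= \sum_j F j.
Proof. by move=> h; rewrite (bigD1 i) //= lerDl sumr_ge0. Qed.
Arguments le_sum_term {R t}.

Lemma sum_flat3 (R : realType) (t N : nat) (F : 'I_t * 'I_t * nat -> R) :
  \sum_(k <- flatten [seq flatten [seq [seq (i, j, q) | q <- iota 1 N] | j <- index_enum 'I_t] | i <- index_enum 'I_t]) F k
  = \sum_i \sum_j \sum_(q <- iota 1 N) F (i, j, q).
Proof.
rewrite big_flatten big_map; apply: eq_bigr => i _.
rewrite big_flatten big_map; apply: eq_bigr => j _.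
by rewrite big_map.
Qed.

Lemma inv_bounds (R : realType) (p : R) : 1/4 <= p -> p <= 1/2 -> 2 <= p^-1 <= 4.
Proof.
move=> p1 p2.
have pn0 : p != 0 by rewrite gt_eqF //; lra.
have pm : p * p^-1 = 1 by rewrite mulfV.
have : 0 < p^-1 by rewrite invr_gt0; lra.
move=> h; apply/andP; split; nra.
Qed.

Lemma mem_sq (t N : nat) (i j : 'I_t) (n : nat) : (0 < n)%N -> (n < N)%N ->
  (i, j, n) \in flatten [seq flatten [seq [seq (i, j, q) | q <- iota 1 N] | j <- index_enum 'I_t] | i <- index_enum 'I_t].
Proof.
move=> n0 nN.
apply/flatten_mapP; exists i; first by rewrite mem_index_enum.
apply/flatten_mapP; exists j; first by rewrite mem_index_enum.
apply/mapP; exists n => //; rewrite mem_iota; lia.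
Qed.

Theorem lemma2 (R : realType) (S t : nat) (M zeta : R)
  (theta zetas : 'I_t -> R) :
  (0 < S)%N -> 0 < M -> (t <= S)%N ->
  (forall i, 0 <= zetas i) ->
  (forall i j : 'I_t, i != j -> forall x : R,
      ~~ (cint (theta i) (zetas i / M) x && cint (theta j) (zetas j / M) x)) ->
  \sum_(i < t) zetas i <= S%:R * zeta ->
  zeta <= 1 / (8 * S%:R * (2 * S%:R - 1)) ->
  exists m : R, 2 <= m <= 4 /\
    forall (i j : 'I_t) (q : int), q != 0 -> forall x : R,
      ~~ (cint (theta i - q%:~R / (M * m)) (zetas i / M) x
          && cint (theta j) (zetas j / M) x).
Proof.
move=> S0 M0 tS z0 _ hsum hz.
set Z := \sum_(i < t) zetas i in hsum.
have Z0 : 0 <= Z by apply: sumr_ge0 => i _.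
have s1 : (1 <= S%:R :> R) by rewrite ler1n.
have ts : (t%:R <= S%:R :> R) by rewrite ler_nat.
set s := S%:R in s1 ts hsum hz.
have Dpos : 0 < 8 * s * (2 * s - 1) by nra.
have hz' : zeta * (8 * s * (2 * s - 1)) <= 1 by rewrite -ler_pdivlMr.
have hZ : 8 * (2 * s - 1) * Z <= 1 by nra.
have ri_le : forall i, zetas i <= Z by move=> i; exact: le_sum_term.
pose dd i j := M * (theta i - theta j).
pose ww i j := zetas i + zetas j.
have ww0 : forall i j, 0 <= ww i j by move=> i j; rewrite /ww; have := z0 i; have := z0 j; lra.
have wwZ : forall i j, ww i j <= 2 * Z by move=> i j; rewrite /ww; have := ri_le i; have := ri_le j; lra.
have Z8 : Z <= 1/8 by nra.
pose X := \sum_i \sum_j `|4 * (dd i j + ww i j)|.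
pose N := Num.bound X.
have HN : forall i j, 4 * (dd i j + ww i j) < N%:R.
  move=> i j; apply: le_lt_trans (ler_norm _) _.
  apply: le_lt_trans (archi_boundP _); last by apply: sumr_ge0 => *; apply: sumr_ge0.
  apply: le_trans (le_sum_term (fun j => `|4 * (dd i j + ww i j)|) j _) _ => //.
  apply: le_sum_term (fun i => \sum_j `|4 * (dd i j + ww i j)|) i _ => k.
  by apply: sumr_ge0.
pose sq := flatten [seq flatten [seq [seq (i, j, q) | q <- iota 1 N] | j <- index_enum 'I_t] | i <- index_enum 'I_t].
pose l (k : 'I_t * 'I_t * nat) := (dd k.1.1 k.1.2 - ww k.1.1 k.1.2) / (k.2)%:R.
pose u (k : 'I_t * 'I_t * nat) := (dd k.1.1 k.1.2 + ww k.1.1 k.1.2) / (k.2)%:R.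
have Htot : \sum_(k <- sq) clip (1/4) (1/2) (l k) (u k) < 1/2 - 1/4.
  rewrite sum_flat3 /l /u /=.
  have step : \sum_i \sum_j \sum_(q <- iota 1 N) clip (1/4) (1/2) ((dd i j - ww i j) / q%:R) ((dd i j + ww i j) / q%:R)
     <= \sum_i \sum_j (4 * (1 + 8 * Z)) * (if 0 < dd i j then zetas i + zetas j else 0).
    apply: ler_sum => i _; apply: ler_sum => j _.
    case: ifP => hd.
      apply: le_trans (@pair_pos R _ _ N hd (ww0 i j)) _.
      have := wwZ i j; have := ww0 i j; rewrite /ww; nra.
    rewrite mulr0; apply: pair_nonpos => //; first by rewrite leNgt hd.
    have := wwZ i j; lra.
  apply: le_lt_trans step _.
  under eq_bigr do rewrite -mulr_sumr.
  rewrite -mulr_sumr.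
  have hE := @esum R t zetas dd z0 (fun i j => ltac:(rewrite /dd; ring)).
  set E := \sum_i _ in hE *.
  have h1 : 4 * (1 + 8 * Z) * E <= 4 * (1 + 8 * Z) * ((s - 1) * Z).
    apply: ler_wpM2l; first lra.
    apply: le_trans hE _; apply: ler_wpM2r => //; lra.
  apply: le_lt_trans h1 _.
  set c := 2 * s - 1 in hZ.
  set Y := 8 * c * Z.
  have hY : Y <= 1 by move: hZ; rewrite /Y; lra.
  have hc : 1 <= c by rewrite /c; lra.
  have Y0 : 0 <= Y by rewrite /Y; nra.
  have h2 : (c + Y) * Y <= c + 1 by nra.
  have h3 : 16 * (c * c) * (4 * (1 + 8 * Z) * ((s - 1) * Z)) = 8 * (s - 1) * ((c + Y) * Y).
    rewrite /Y; ring.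
  have h4 : 8 * (s - 1) * ((c + Y) * Y) <= 8 * (s - 1) * (c + 1) by apply: ler_wpM2l => //; lra.
  have h5 : 8 * (s - 1) * (c + 1) < 16 * (c * c) * (1/2 - 1/4) by rewrite /c; nra.
  have cc : 0 < 16 * (c * c) by nra.
  rewrite -(ltr_pM2l cc) h3; lra.
have [p [hp Hp]] := @cover_itv R _ l u (size sq) sq (1/4) (1/2) (leqnn _) ltac:(lra) Htot.
move/andP: hp => [p1 p2].
have p0 : 0 < p by lra.
have pn0 : p != 0 by rewrite gt_eqF.
clearbody N.
have claim : forall i j (n : nat), (0 < n)%N -> dd i j - ww i j <= n%:R * p ->
    n%:R * p <= dd i j + ww i j -> False.
  move=> i j n n0 h1 h2.
  have nR : (0 < n%:R :> R) by rewrite ltr0n.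
  have nN : (n < N)%N.
    rewrite -(ltr_nat R); have := HN i j.
    have : n%:R * (1/4) <= n%:R * p by apply: ler_wpM2l; lra.
    lra.
  have mem : (i, j, n) \in sq.
    exact: mem_sq n0 nN.
  move/negP: (Hp _ mem); apply; rewrite /l /u /=.
  rewrite ler_pdivrMr // ler_pdivlMr // mulrC h1 /=; exact: h2.
exists p^-1; split.
  exact: inv_bounds.
move=> i j q q0 x; apply/negP; rewrite /cint => /andP[/andP[h1 h2] /andP[h3 h4]].
set Q := q%:~R : R in h1 h2.
have Mn0 : M != 0 by rewrite gt_eqF.
have e1 : M * (Q / (M * p^-1)) = Q * p by field; rewrite pn0 Mn0.
have e2 : forall k, M * (zetas k / M) = zetas k by move=> k; field.
have hlo : dd i j - ww i j <= Q * p.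
  rewrite /dd /ww -e1 -(e2 i) -(e2 j).
  have : 0 <= M * (x - (theta i - Q / (M * p^-1) - zetas i / M) + (theta j + zetas j / M - x)).
    apply: mulr_ge0; lra.
  lra.
have hhi : Q * p <= dd i j + ww i j.
  rewrite /dd /ww -e1 -(e2 i) -(e2 j).
  have : 0 <= M * ((theta i - Q / (M * p^-1) + zetas i / M - x) + (x - (theta j - zetas j / M))).
    apply: mulr_ge0; lra.
  lra.
move: q0 hlo hhi; rewrite /Q; clear h1 h2 h3 h4 e1 Q; case: q => n.
  rewrite -pmulrn => n0 hlo hhi; apply: (claim i j n) => //.
  by rewrite lt0n; apply: contraNneq n0 => ->.
rewrite NegzE intrN -pmulrn => _ hlo hhi.
apply: (claim j i n.+1) => //.
  rewrite /dd /ww in hlo hhi *; lra.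
rewrite /dd /ww in hlo hhi *; lra.
Qed.
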